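(* For every $d>0$ there is a constant $c(d)>0$ such that for every $q\in(0,1/2)$ and every integer $r>2$ with $2^r\le d/q$, $$T_{\rm rel}(\ell_r)\le q^{-c(d)}\frac{r!}{q^r2^{\binom r2}},$$ where $\ell_1=3$ and $\ell_i=2\ell_{i-1}-\lceil\ell_{i-1}/r\rceil$ for $2\le i\le r$.
   Context: Fix $q\in(0,1/2)$, $p=1-q$. $T_{\rm rel}(L)$ is the relaxation time (inverse spectral gap) of the East process on $\{1,\dots,L\}$: the Markov chain on $\{0,1\}^{\{1,\dots,L\}}$ with generator $\mathcal L f(\sigma)=\sum_{x}c_x(\sigma)[\pi_x(f)-f](\sigma)$, $c_1\equiv1$, $c_x(\sigma)=1-\sigma_{x-1}$ ($x\ge2$), $\pi_x(f)$ the average over $\sigma_x\sim$ Bernoulli$(p)$ (value $1$ w.p. $p$). *)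

(* Defs.v *)
From Stdlib Require Import Reals List Arith.
Import ListNotations.
Open Scope R_scope.

(* A configuration of the East process on {1,...,L} is a list of booleans of
   length L; site x (1 <= x <= L) is the entry at index x-1; true = 1. *)
Definition site (s : list bool) (x : nat) : bool := nth (x - 1) s false.

Fixpoint set_nth_b (s : list bool) (i : nat) (b : bool) : list bool :=
  match s, i with
  | [], _ => []
  | _ :: t, O => b :: t
  | a :: t, S j => a :: set_nth_b t j b
  end.
Definition set_site (s : list bool) (x : nat) (b : bool) : list bool :=
  set_nth_b s (x - 1) b.

Fixpoint configs (L : nat) : list (list bool) :=
  match L with
  | O => [[]]
  | S L' => flat_map (fun s => [true :: s; false :: s]) (configs L')
  end.

(* product Bernoulli(p) measure, p = 1 - q, weight of a configuration *)
Fixpoint weight (q : R) (s : list bool) : R :=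
  match s with
  | [] => 1
  | b :: t => (if b then 1 - q else q) * weight q t
  end.

Definition mu (q : R) (L : nat) (f : list bool -> R) : R :=
  fold_right Rplus 0 (map (fun s => weight q s * f s) (configs L)).

Definition Var (q : R) (L : nat) (f : list bool -> R) : R :=
  mu q L (fun s => f s * f s) - mu q L f * mu q L f.

Definition constr (s : list bool) (x : nat) : R :=
  match x with
  | O | S O => 1
  | S (S _ as y) => if site s y then 0 else 1
  end.

Definition pi_x (q : R) (x : nat) (f : list bool -> R) (s : list bool) : R :=
  (1 - q) * f (set_site s x true) + q * f (set_site s x false).

Definition gen (q : R) (L : nat) (f : list bool -> R) (s : list bool) : R :=
  fold_right Rplus 0
    (map (fun x => constr s x * (pi_x q x f s - f s)) (seq 1 L)).

Definition Dir (q : R) (L : nat) (f : list bool -> R) : R :=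
  - mu q L (fun s => f s * gen q L f s).

Definition is_glb (E : R -> Prop) (m : R) : Prop :=
  (forall x, E x -> m <= x) /\ (forall b, (forall x, E x -> b <= x) -> b <= m).

Definition is_spectral_gap (q : R) (L : nat) (g : R) : Prop :=
  is_glb (fun t => exists f : list bool -> R,
            Var q L f <> 0 /\ t = Dir q L f / Var q L f) g.

(* ell r i = \ell_i for 1 <= i:  ell_1 = 3,
   ell_i = 2 ell_{i-1} - ceil(ell_{i-1} / r) *)
Fixpoint ell (r i : nat) : nat :=
  match i with
  | O | S O => 3
  | S (S _ as j) =>
      let a := ell r j in (2 * a - (a + r - 1) / r)%nat
  end.

(* Main.v *)
Require Import Defs.
From Stdlib Require Import Reals List Arith Lia Lra Psatz.
Import ListNotations.
Open Scope R_scope.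


Definition sumR {A} (l : list A) (F : A -> R) : R := fold_right Rplus 0 (map F l).

Lemma mu_0 q f : mu q 0 f = f [].
Proof. unfold mu; simpl; ring. Qed.

Lemma sum_flat (h : list bool -> R) l :
  fold_right Rplus 0 (map h (flat_map (fun s => [true::s; false::s]) l)) =
  fold_right Rplus 0 (map (fun s => h (true::s) + h (false::s)) l).
Proof. induction l; simpl; [ring| rewrite IHl; ring]. Qed.

Lemma mu_S q L f : mu q (S L) f = mu q L (fun s => (1-q)*f(true::s) + q*f(false::s)).
Proof.
  unfold mu; simpl configs. rewrite sum_flat. f_equal. apply map_ext; intros; simpl; ring.
Qed.

Lemma mu_ext q L f g : (forall s, length s = L -> f s = g s) -> mu q L f = mu q L g.
Proof.
  revert f g; induction L; intros f g H.
  - rewrite !mu_0; apply H; reflexivity.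
  - rewrite !mu_S; apply IHL; intros s Hs; rewrite !H; simpl; auto.
Qed.

Lemma mu_plus q L f g : mu q L (fun s => f s + g s) = mu q L f + mu q L g.
Proof.
  revert f g; induction L; intros f g.
  - rewrite !mu_0; ring.
  - rewrite !mu_S. rewrite <- IHL. apply mu_ext; intros; ring.
Qed.

Lemma mu_scal q L c f : mu q L (fun s => c * f s) = c * mu q L f.
Proof.
  revert f; induction L; intros f.
  - rewrite !mu_0; ring.
  - rewrite !mu_S. rewrite <- IHL. apply mu_ext; intros; ring.
Qed.

Lemma mu_const q L c : mu q L (fun _ => c) = c.
Proof.
  induction L.
  - rewrite mu_0; ring.
  - rewrite mu_S. transitivity (mu q L (fun _ => c)); [apply mu_ext; intros; ring | exact IHL].
Qed.

Lemma mu_le q L f g : 0 <= q <= 1 -> (forall s, length s = L -> f s <= g s) -> mu q L f <= mu q L g.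
Proof.
  intros Hq; revert f g; induction L; intros f g H.
  - rewrite !mu_0; apply H; reflexivity.
  - rewrite !mu_S; apply IHL; intros s Hs.
    assert (f (true::s) <= g (true::s)) by (apply H; simpl; auto).
    assert (f (false::s) <= g (false::s)) by (apply H; simpl; auto).
    nra.
Qed.

Lemma mu_minus q L f g : mu q L (fun s => f s - g s) = mu q L f - mu q L g.
Proof.
  replace (mu q L (fun s => f s - g s)) with (mu q L (fun s => f s + (-1) * g s)).
  - rewrite mu_plus, mu_scal; ring.
  - apply mu_ext; intros; ring.
Qed.

Lemma mu_split q m n F : mu q (m+n) F = mu q m (fun u => mu q n (fun t => F (u++t))).
Proof.
  revert F; induction m; intros F.
  - rewrite mu_0; simpl; reflexivity.
  - simpl (S m + n)%nat. rewrite !mu_S, IHm. apply mu_ext; intros u _.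
    rewrite <- !mu_scal, <- mu_plus. reflexivity.
Qed.

Lemma mu_swap q m n (H : list bool -> list bool -> R) :
  mu q m (fun u => mu q n (fun t => H u t)) = mu q n (fun t => mu q m (fun u => H u t)).
Proof.
  revert H; induction m; intros H.
  - rewrite mu_0. apply mu_ext; intros; rewrite mu_0; reflexivity.
  - rewrite mu_S.
    transitivity (mu q m (fun u => mu q n (fun t => (1-q) * H (true::u) t + q * H (false::u) t))).
    + apply mu_ext; intros. rewrite mu_plus, !mu_scal; reflexivity.
    + rewrite IHm. apply mu_ext; intros. rewrite mu_S; reflexivity.
Qed.

Lemma mu_split' q m n F : mu q (m+n) F = mu q n (fun t => mu q m (fun u => F (u++t))).
Proof. rewrite mu_split, mu_swap; reflexivity. Qed.


Definition vx q x (f : list bool -> R) s :=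
  q*(1-q)*(f (set_site s x true) - f (set_site s x false))^2.
Definition kz q z f s := constr s z * vx q z f s.
Definition DS q L f := sumR (seq 1 L) (fun z => mu q L (kz q z f)).

Lemma nth_set_other s i j b d : i <> j -> nth j (set_nth_b s i b) d = nth j s d.
Proof.
  revert i j; induction s; intros i j H; simpl; auto.
  destruct i, j; simpl; auto. congruence.
Qed.

Lemma set_set s i b c : set_nth_b (set_nth_b s i b) i c = set_nth_b s i c.
Proof. revert i; induction s; intros i; destruct i; simpl; auto; rewrite IHs; auto. Qed.

Lemma set_app_l u t i b : (i < length u)%nat -> set_nth_b (u++t) i b = set_nth_b u i b ++ t.
Proof.
  revert i; induction u; intros i H; simpl in *. lia.
  destruct i; simpl; auto. rewrite IHu; auto; lia.
Qed.

Lemma set_app_r u t i b : set_nth_b (u++t) (length u + i) b = u ++ set_nth_b t i b.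
Proof. induction u; simpl; auto. rewrite IHu; auto. Qed.

Lemma sumR_plus {A} (l : list A) F G : sumR l (fun x => F x + G x) = sumR l F + sumR l G.
Proof. induction l; unfold sumR in *; simpl; [ring|rewrite IHl; ring]. Qed.
Lemma sumR_scal {A} (l : list A) c F : sumR l (fun x => c * F x) = c * sumR l F.
Proof. induction l; unfold sumR in *; simpl; [ring|rewrite IHl; ring]. Qed.
Lemma sumR_ext {A} (l : list A) F G : (forall x, In x l -> F x = G x) -> sumR l F = sumR l G.
Proof. induction l; unfold sumR in *; simpl; intros H; auto. rewrite H, IHl; auto. Qed.
Lemma sumR_le {A} (l : list A) F G : (forall x, In x l -> F x <= G x) -> sumR l F <= sumR l G.
Proof. induction l; unfold sumR in *; simpl; intros H; [lra|]. 
  assert (F a <= G a) by auto. assert (fold_right Rplus 0 (map F l) <= fold_right Rplus 0 (map G l)) by auto. lra. Qed.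
Lemma sumR_app {A} (l1 l2 : list A) F : sumR (l1++l2) F = sumR l1 F + sumR l2 F.
Proof. induction l1; unfold sumR in *; simpl; [ring| rewrite IHl1; ring]. Qed.
Lemma sumR_nonneg {A} (l : list A) F : (forall x, In x l -> 0 <= F x) -> 0 <= sumR l F.
Proof. induction l; unfold sumR in *; simpl; intros H; [lra|].
  assert (0 <= F a) by auto. assert (0 <= fold_right Rplus 0 (map F l)) by auto. lra. Qed.

Lemma mu_sumR {A} q L (l : list A) F :
  mu q L (fun s => sumR l (fun x => F x s)) = sumR l (fun x => mu q L (F x)).
Proof.
  induction l; unfold sumR in *; simpl.
  - apply mu_const.
  - rewrite mu_plus, IHl; reflexivity.
Qed.

Lemma mu_pi q L x h : (1 <= x <= L)%nat -> mu q L h = mu q L (pi_x q x h).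
Proof.
  revert x h; induction L; intros x h Hx. lia.
  destruct x as [|[|x']]. lia.
  - rewrite !mu_S; apply mu_ext; intros s _; unfold pi_x, set_site; simpl. ring.
  - rewrite !mu_S.
    transitivity (mu q L (fun s => (1-q) * pi_x q (S x') (fun s => h (true::s)) s
                                 + q * pi_x q (S x') (fun s => h (false::s)) s)).
    + rewrite !mu_plus, !mu_scal, <- !IHL by lia. reflexivity.
    + apply mu_ext; intros s _. unfold pi_x, set_site; simpl. replace (x' - 0)%nat with x' by lia.
      reflexivity.
Qed.

Lemma constr_set s x b : constr (set_site s x b) x = constr s x.
Proof.
  destruct x as [|[|y]]; simpl; auto. unfold site, set_site.
  replace (S (S y) - 1)%nat with (S y) by lia. replace (S y - 1)%nat with y by lia.
  rewrite nth_set_other by lia. reflexivity.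
Qed.

Lemma pi_set q x f s b : pi_x q x f (set_site s x b) = pi_x q x f s.
Proof. unfold pi_x, set_site. rewrite !set_set. reflexivity. Qed.

Lemma Dir_eq q L f : Dir q L f = DS q L f.
Proof.
  unfold Dir, DS, gen.
  transitivity (- mu q L (fun s => sumR (seq 1 L) (fun x => f s * (constr s x * (pi_x q x f s - f s))))).
  { f_equal. apply mu_ext; intros s _. rewrite sumR_scal. reflexivity. }
  rewrite mu_sumR. rewrite <- (Rmult_1_l (sumR _ _)) at 1.
  replace (- (1 * _)) with ((-1) * sumR (seq 1 L) (fun x => mu q L (fun s => f s * (constr s x * (pi_x q x f s - f s))))) by ring.
  rewrite <- sumR_scal. apply sumR_ext. intros x Hx. apply in_seq in Hx.
  rewrite (mu_pi q L x) by lia. rewrite <- mu_scal. apply mu_ext; intros s _.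
  unfold pi_x at 1. rewrite !constr_set, !pi_set. unfold kz, vx, pi_x.
  ring.
Qed.


Lemma Var_alt q L f : Var q L f = mu q L (fun s => (f s - mu q L f)^2).
Proof.
  unfold Var. set (m := mu q L f).
  transitivity (mu q L (fun s => f s * f s + (-2*m) * f s + m*m)).
  - rewrite !mu_plus, mu_scal, mu_const. fold m. ring.
  - apply mu_ext; intros; ring.
Qed.

Lemma Var_le_c q L f c : Var q L f <= mu q L (fun s => (f s - c)^2).
Proof.
  unfold Var. set (m := mu q L f).
  replace (mu q L (fun s => (f s - c)^2)) with (mu q L (fun s => f s * f s + (-2*c) * f s + c*c)).
  - rewrite !mu_plus, mu_scal, mu_const. fold m. pose proof (pow2_ge_0 (m - c)). nra.
  - apply mu_ext; intros; ring.
Qed.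

Lemma Var_nonneg q L f : 0 <= q <= 1 -> 0 <= Var q L f.
Proof.
  intros Hq. rewrite Var_alt. rewrite <- (mu_const q L 0). apply mu_le; auto.
  intros; apply pow2_ge_0.
Qed.

Lemma Var_tri q L f g : 0 <= q <= 1 ->
  Var q L f <= 2 * Var q L g + 2 * mu q L (fun s => (f s - g s)^2).
Proof.
  intros Hq. eapply Rle_trans. apply (Var_le_c q L f (mu q L g)).
  rewrite (Var_alt q L g). rewrite <- !mu_scal, <- mu_plus. apply mu_le; auto.
  intros s _. set (a := f s). set (b := g s). set (m := mu q L g).
  pose proof (pow2_ge_0 (a - 2*b + m)). simpl. nra.
Qed.

Lemma mu_drop q m n H : mu q (m+n) (fun t => H (skipn m t)) = mu q n H.
Proof.
  rewrite mu_split. transitivity (mu q m (fun _ => mu q n H)).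
  - apply mu_ext; intros u Hu. apply mu_ext; intros t _.
    rewrite skipn_app. rewrite Hu. rewrite Nat.sub_diag, skipn_O.
    replace (skipn m u) with (@nil bool). reflexivity.
    subst m. rewrite skipn_all. reflexivity.
  - apply mu_const.
Qed.

Lemma Var_drop q m n H : Var q (m+n) (fun t => H (skipn m t)) = Var q n H.
Proof.
  unfold Var. rewrite (mu_drop q m n H).
  rewrite (mu_drop q m n (fun t => H t * H t)). reflexivity.
Qed.

Definition indb (b : bool) : R := if b then 1 else 0.
Lemma indb_nonneg b : 0 <= indb b. Proof. destruct b; simpl; lra. Qed.
Lemma indb_le1 b : indb b <= 1. Proof. destruct b; simpl; lra. Qed.

Lemma constr_01 s x : 0 <= constr s x <= 1.
Proof. destruct x as [|[|y]]; simpl; try lra. destruct (site s (S y)); lra. Qed.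

Lemma kz_nonneg q z f s : 0 <= q <= 1 -> 0 <= kz q z f s.
Proof.
  intros Hq. unfold kz, vx. pose proof (constr_01 s z).
  apply Rmult_le_pos; [lra|]. apply Rmult_le_pos; [nra|]. apply pow2_ge_0.
Qed.

Lemma DS_nonneg q L f : 0 <= q <= 1 -> 0 <= DS q L f.
Proof.
  intros Hq. apply sumR_nonneg; intros. rewrite <- (mu_const q L 0). apply mu_le; auto.
  intros; apply kz_nonneg; auto.
Qed.

Lemma site_app_l u t y : (1 <= y <= length u)%nat -> site (u++t) y = site u y.
Proof. intros H; unfold site. apply app_nth1. lia. Qed.

Lemma site_app_r u t y : (1 <= y)%nat -> site (u++t) (length u + y) = site t y.
Proof. intros H; unfold site. rewrite app_nth2 by lia. f_equal. lia. Qed.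

Lemma set_site_app_l u t y b : (1 <= y <= length u)%nat -> set_site (u++t) y b = set_site u y b ++ t.
Proof. intros H; unfold set_site. apply set_app_l. lia. Qed.

Lemma set_site_app_r u t y b : (1 <= y)%nat -> set_site (u++t) (length u + y) b = u ++ set_site t y b.
Proof. intros H; unfold set_site. replace (length u + y - 1)%nat with (length u + (y-1))%nat by lia.
  apply set_app_r. Qed.

Lemma constr_app_l u t y : (1 <= y <= length u)%nat -> constr (u++t) y = constr u y.
Proof.
  intros H. destruct y as [|[|y]]; simpl; auto. rewrite site_app_l by lia. reflexivity.
Qed.

Lemma constr_app_r u t y : (1 <= length u)%nat -> site u (length u) = false -> (1 <= y)%nat ->
  constr (u++t) (length u + y) = constr t y.
Proof.
  intros H1 H2 H3. destruct y as [|[|y]]. lia.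
  - replace (length u + 1)%nat with (S (S (length u - 1))) by lia. simpl.
    replace (S (length u - 1)) with (length u) by lia.
    rewrite site_app_l by lia. rewrite H2. reflexivity.
  - replace (length u + S (S y))%nat with (S (S (length u + y))) by lia. simpl.
    replace (S (length u + y)) with (length u + S y)%nat by lia.
    rewrite site_app_r by lia. reflexivity.
Qed.

Lemma kz_app_l q f u t y : (1 <= y <= length u)%nat ->
  kz q y f (u++t) = kz q y (fun u' => f (u'++t)) u.
Proof.
  intros H. unfold kz, vx. rewrite constr_app_l, !set_site_app_l by lia. reflexivity.
Qed.

Lemma kz_app_r q f u t y : (1 <= length u)%nat -> site u (length u) = false -> (1 <= y)%nat ->
  kz q (length u + y) f (u++t) = kz q y (fun t' => f (u++t')) t.
Proof.
  intros H1 H2 H3. unfold kz, vx. rewrite constr_app_r, !set_site_app_r by (auto; lia). reflexivity.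
Qed.

Lemma sumR_seq_shift x k n (F : nat -> R) :
  sumR (seq (x+k) n) F = sumR (seq k n) (fun y => F (x+y)%nat).
Proof.
  revert k; induction n; intros k; unfold sumR in *; simpl; auto.
  rewrite <- IHn. replace (S (x+k)) with (x + S k)%nat by lia. reflexivity.
Qed.

Lemma lift q x n (phi : list bool -> R) h :
  (forall u t, length u = x -> phi (u++t) = phi u) ->
  mu q x (fun u => phi u * mu q n (fun t => h (u++t))) = mu q (x+n) (fun s => phi s * h s).
Proof.
  intros Hphi. rewrite mu_split. apply mu_ext; intros u Hu.
  rewrite <- mu_scal. apply mu_ext; intros t _. rewrite Hphi; auto.
Qed.


Definition E s x (sg : list bool) : bool :=
  negb (site sg x) && forallb (fun y => site sg y) (seq (S s) (x - S s)).

Lemma forallb_ext_in {A} (f g : A -> bool) l : (forall y, In y l -> f y = g y) -> forallb f l = forallb g l.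
Proof. induction l; simpl; intros H; auto. rewrite H, IHl; auto. Qed.

Lemma E_app s u t : (S s <= length u)%nat -> E s (length u) (u++t) = E s (length u) u.
Proof.
  intros H. unfold E. rewrite site_app_l by lia. f_equal.
  apply forallb_ext_in. intros y Hy. apply in_seq in Hy. apply site_app_l. lia.
Qed.

Lemma E_false s u : E s (length u) u = true -> site u (length u) = false.
Proof. unfold E. intros H. apply andb_prop in H. destruct H as [H _]. destruct (site u (length u)); auto. Qed.

Lemma sum_E_gen s sg k m : (S s <= m)%nat ->
  sumR (seq m k) (fun x => indb (E s x sg)) =
  indb (forallb (site sg) (seq (S s) (m - S s))) * (1 - indb (forallb (site sg) (seq m k))).
Proof.
  revert m; induction k; intros m Hm.
  - unfold sumR; simpl. ring.
  - change (seq m (S k)) with (m :: seq (S m) k).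
    unfold sumR; simpl. fold (sumR (seq (S m) k) (fun x => indb (E s x sg))).
    rewrite IHk by lia.
    replace (S m - S s)%nat with (S (m - S s)) by lia.
    rewrite seq_S. replace (S s + (m - S s))%nat with m by lia.
    rewrite forallb_app. unfold E. simpl.
    destruct (site sg m), (forallb (fun y => site sg y) (seq (S s) (m - S s))),
      (forallb (site sg) (seq (S m) k)); simpl; ring.
Qed.

Lemma sum_E s sg d :
  sumR (seq (S s) d) (fun x => indb (E s x sg)) = 1 - indb (forallb (site sg) (seq (S s) d)).
Proof. rewrite sum_E_gen by lia. rewrite Nat.sub_diag. simpl. ring. Qed.

Lemma fa_shift b sg k d : forallb (site (b::sg)) (seq (S (S k)) d) = forallb (site sg) (seq (S k) d).
Proof.
  revert k; induction d; intros k; simpl; auto.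
  rewrite IHd. unfold site; simpl. rewrite Nat.sub_0_r. reflexivity.
Qed.

Lemma mu_allones q L s d : (s + d <= L)%nat ->
  mu q L (fun sg => indb (forallb (site sg) (seq (S s) d))) = (1-q)^d.
Proof.
  revert s d; induction L; intros s d H.
  - assert (d = 0%nat) by lia. subst. rewrite mu_0. simpl. reflexivity.
  - rewrite mu_S. destruct s as [|s'].
    + destruct d as [|d'].
      * simpl. transitivity (mu q L (fun _ => 1)). apply mu_ext; intros; ring. apply mu_const.
      * change ((1-q)^(S d')) with ((1-q)*(1-q)^d'). rewrite <- (IHL 0%nat d') by lia. rewrite <- mu_scal. apply mu_ext; intros sg _.
        change (seq 1 (S d')) with (1%nat :: seq 2 d'). simpl forallb.
        rewrite !fa_shift. unfold site at 1 2; simpl. ring.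
    + rewrite <- (IHL s' d) by lia. apply mu_ext; intros sg _. rewrite !fa_shift. ring.
Qed.

Lemma sum_mu_E q L s d h : 0 <= q <= 1 -> (forall sg, 0 <= h sg) ->
  sumR (seq (S s) d) (fun x => mu q L (fun sg => indb (E s x sg) * h sg)) <= mu q L h.
Proof.
  intros Hq Hh. rewrite <- mu_sumR. apply mu_le; auto. intros sg _.
  transitivity (sumR (seq (S s) d) (fun x => indb (E s x sg)) * h sg).
  - apply Req_le. rewrite Rmult_comm, <- sumR_scal. apply sumR_ext; intros; ring.
  - rewrite sum_E. pose proof (indb_nonneg (forallb (site sg) (seq (S s) d))). pose proof (Hh sg). nra.
Qed.

Lemma sum_mu_E_eq q L s d : (s + d <= L)%nat ->
  sumR (seq (S s) d) (fun x => mu q L (fun sg => indb (E s x sg))) = 1 - (1-q)^d.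
Proof.
  intros H. rewrite <- mu_sumR. rewrite <- (mu_allones q L s d H), <- (mu_const q L 1), <- mu_minus.
  apply mu_ext; intros sg _. rewrite sum_E. reflexivity.
Qed.


Definition PIn q L T := forall f, Var q L f <= T * DS q L f.

Lemma mu_nonneg q L h : 0 <= q <= 1 -> (forall s, 0 <= h s) -> 0 <= mu q L h.
Proof. intros. rewrite <- (mu_const q L 0). apply mu_le; auto. Qed.

Lemma sumR_sub_seq (F : nat -> R) x n : (forall z, 0 <= F z) ->
  sumR (seq (S x) n) F <= sumR (seq 1 (x + n)) F.
Proof.
  intros H. rewrite seq_app, sumR_app. replace (1 + x)%nat with (S x) by lia.
  pose proof (sumR_nonneg (seq 1 x) F (fun z _ => H z)). lra.
Qed.

Lemma DA_le q a n0 f : 0 <= q <= 1 ->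
  mu q n0 (fun t => DS q a (fun u => f (u++t))) <= DS q (a+n0) f.
Proof.
  intros Hq. unfold DS.
  rewrite (mu_sumR q n0 (seq 1 a) (fun y t => mu q a (kz q y (fun u => f (u++t))))).
  eapply Rle_trans; [| apply (sumR_sub_seq (fun z => mu q (a+n0) (kz q z f)) 0 (a+n0))].
  2:{ intros; apply mu_nonneg; auto; intros; apply kz_nonneg; auto. }
  rewrite seq_app, sumR_app. simpl (1+a)%nat.
  assert (Hx : sumR (seq 1 a) (fun y => mu q n0 (fun t => mu q a (kz q y (fun u => f (u++t)))))
          = sumR (seq 1 a) (fun z => mu q (a+n0) (kz q z f))).
  { apply sumR_ext; intros y Hy. apply in_seq in Hy. rewrite mu_split'.
    apply mu_ext; intros t _. apply mu_ext; intros u Hu. rewrite kz_app_l by lia. reflexivity. }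
  rewrite Hx. pose proof (sumR_nonneg (seq (S a) n0) (fun z => mu q (a+n0) (kz q z f))).
  assert (0 <= sumR (seq (S a) n0) (fun z => mu q (a + n0) (kz q z f))).
  { apply sumR_nonneg; intros; apply mu_nonneg; auto; intros; apply kz_nonneg; auto. }
  simpl. lra.
Qed.

Definition Kf q L f (s : list bool) := sumR (seq 1 L) (fun z => kz q z f s).

Lemma DB_le q L x f u : 0 <= q <= 1 -> (1 <= x <= L)%nat -> length u = x -> site u x = false ->
  DS q (L - x) (fun t => f (u++t)) <= mu q (L - x) (fun t => Kf q L f (u++t)).
Proof.
  intros Hq Hx Hu Hs. unfold Kf. rewrite mu_sumR. unfold DS.
  replace (sumR (seq 1 (L-x)) (fun z => mu q (L-x) (kz q z (fun t => f (u++t)))))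
    with (sumR (seq (x+1) (L-x)) (fun z => mu q (L-x) (fun t => kz q z f (u++t)))).
  - replace (x+1)%nat with (S x) by lia.
    pose proof (sumR_sub_seq (fun z => mu q (L - x) (fun t => kz q z f (u ++ t))) x (L-x)) as HH.
    replace (x + (L - x))%nat with L in HH by lia. apply HH.
    intros; apply mu_nonneg; auto; intros; apply kz_nonneg; auto.
  - rewrite sumR_seq_shift. apply sumR_ext; intros y Hy. apply in_seq in Hy.
    apply mu_ext; intros t _. subst x. rewrite kz_app_r by (auto; lia). reflexivity.
Qed.


Lemma skipn_app_le (u t : list bool) k : (length u <= k)%nat -> skipn k (u++t) = skipn (k - length u) t.
Proof. intros H. rewrite skipn_app. rewrite skipn_all2 by lia. reflexivity. Qed.

Lemma lift' q x L (phi : list bool -> R) h : (x <= L)%nat ->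
  (forall u t, length u = x -> phi (u++t) = phi u) ->
  mu q x (fun u => phi u * mu q (L - x) (fun t => h (u++t))) = mu q L (fun s => phi s * h s).
Proof.
  intros HL Hphi. remember (L - x)%nat as n. replace L with (x+n)%nat by lia. apply lift; auto.
Qed.

Lemma Var_drop' q a n0 x H : (x <= a)%nat ->
  Var q (a+n0-x) (fun t => H (skipn (a-x) t)) = Var q n0 H.
Proof.
  intros Hx. remember (a - x)%nat as m. replace (a+n0-x)%nat with (m+n0)%nat by lia. apply Var_drop.
Qed.

Lemma pow_le1 x n : 0 <= x <= 1 -> 0 <= x^n <= 1.
Proof. intros H; induction n; simpl; [lra|]. nra. Qed.

Lemma bisect q a n0 d TA TB f :
  0 <= q <= 1 -> (1 <= d <= a)%nat -> (n0 <= a - d + 1)%nat ->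
  0 <= TA -> 0 <= TB -> PIn q a TA -> (forall n, (n <= a)%nat -> PIn q n TB) ->
  (1 - (1-q)^d) * Var q (a+n0) f <=
    (1 - (1-q)^d) * TA * DS q (a+n0) f + 2*TB*DS q (a+n0) f + 2*TA*DS q (a+n0) f.
Proof.
  intros Hq Hd Hn0 HTA HTB PA PB.
  set (s := (a - d)%nat).
  set (G := fun t => mu q a (fun u => f (u++t))).
  set (g := fun sg : list bool => G (skipn a sg)).
  set (EA := mu q n0 (fun t => Var q a (fun u => f (u++t)))).
  set (D := DS q (a+n0) f).
  set (eps := 1 - (1-q)^d).
  assert (Heps : 0 <= eps).
  { unfold eps. assert (0 <= 1 - q <= 1) by lra. pose proof (pow_le1 (1-q) d H). lra. }
  assert (H1 : Var q (a+n0) f = EA + Var q n0 G).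
  { unfold Var at 1. rewrite !mu_split'. unfold EA, Var. rewrite mu_minus. unfold G. ring. }
  assert (H2 : mu q (a+n0) (fun sg => (f sg - g sg)^2) = EA).
  { rewrite mu_split'. unfold EA. apply mu_ext; intros t _. rewrite Var_alt.
    apply mu_ext; intros u Hu. unfold g. rewrite skipn_app_le by lia. rewrite Hu, Nat.sub_diag.
    reflexivity. }
  assert (H7 : EA <= TA * D).
  { unfold D. eapply Rle_trans.
    - apply (mu_le q n0 _ (fun t => TA * DS q a (fun u => f (u++t)))); auto.
    - rewrite mu_scal. apply Rmult_le_compat_l; auto. apply DA_le; auto. }
  set (T1 := fun x => mu q x (fun u => indb (E s x u) * Var q (a+n0-x) (fun t => g (u++t)))).
  set (T2 := fun x => mu q x (fun u => indb (E s x u) * Var q (a+n0-x) (fun t => f (u++t)))).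
  set (T3 := fun x => mu q x (fun u => indb (E s x u) *
                        mu q (a+n0-x) (fun t => (f (u++t) - g (u++t))^2))).
  assert (HE : forall x, In x (seq (S s) d) -> forall u t, length u = x -> E s x (u++t) = E s x u).
  { intros x Hx u t Hu. apply in_seq in Hx. subst x. apply E_app. lia. }
  assert (H3 : sumR (seq (S s) d) T1 = eps * Var q n0 G).
  { transitivity (sumR (seq (S s) d) (fun x => Var q n0 G * mu q (a+n0) (fun sg => indb (E s x sg)))).
    - apply sumR_ext; intros x Hx. unfold T1.
      pose proof (in_seq d (S s) x) as Hin. apply Hin in Hx.
      transitivity (mu q x (fun u => Var q n0 G * (indb (E s x u) * mu q (a+n0-x) (fun t => 1)))).
      + apply mu_ext; intros u Hu. rewrite mu_const.
        replace (Var q (a+n0-x) (fun t => g (u++t))) with (Var q n0 G). ring.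
        rewrite <- (Var_drop' q a n0 x G) by lia. unfold Var. f_equal; [|f_equal]; apply mu_ext; intros t _;
          unfold g; rewrite skipn_app_le by lia; rewrite Hu; reflexivity.
      + rewrite mu_scal. f_equal. rewrite (lift' q x (a+n0) (fun u => indb (E s x u)) (fun _ => 1)).
        * apply mu_ext; intros; ring.
        * lia.
        * intros u t Hu. rewrite (HE x) by (auto; apply in_seq; lia). reflexivity.
    - rewrite sumR_scal, sum_mu_E_eq by lia. unfold eps. ring. }
  assert (H4 : sumR (seq (S s) d) T1 <= 2 * sumR (seq (S s) d) T2 + 2 * sumR (seq (S s) d) T3).
  { rewrite <- !sumR_scal, <- sumR_plus. apply sumR_le; intros x Hx. unfold T1, T2, T3.
    rewrite <- !mu_scal, <- mu_plus. apply mu_le; auto. intros u _.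
    pose proof (indb_nonneg (E s x u)).
    pose proof (Var_tri q (a+n0-x) (fun t => g (u++t)) (fun t => f (u++t)) Hq).
    cbv beta in H0.
    rewrite (mu_ext q (a+n0-x) (fun s0 : list bool => (g (u ++ s0) - f (u ++ s0)) ^ 2)
      (fun t => (f (u ++ t) - g (u ++ t)) ^ 2)) in H0 by (intros; ring).
    nra. }
  assert (H5 : sumR (seq (S s) d) T3 <= EA).
  { rewrite <- H2. eapply Rle_trans; [| apply (sum_mu_E q (a+n0) s d); auto].
    - apply Req_le. apply sumR_ext; intros x Hx. unfold T3.
      apply (lift' q x (a+n0) (fun u => indb (E s x u)) (fun sg => (f sg - g sg)^2)).
      + apply in_seq in Hx; lia.
      + intros u t Hu. rewrite (HE x) by auto. reflexivity.
    - intros; apply pow2_ge_0. }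
  assert (H6 : sumR (seq (S s) d) T2 <= TB * D).
  { unfold D. transitivity (sumR (seq (S s) d) (fun x => TB * mu q (a+n0) (fun sg => indb (E s x sg) * Kf q (a+n0) f sg))).
    - apply sumR_le; intros x Hx. unfold T2.
      pose proof Hx as Hx'. apply in_seq in Hx'.
      rewrite <- (lift' q x (a+n0) (fun u => indb (E s x u)) (Kf q (a+n0) f)) by
        (try lia; intros u t Hu; rewrite (HE x) by auto; reflexivity).
      rewrite <- mu_scal. apply mu_le; auto. intros u Hu.
      destruct (E s x u) eqn:HEu; simpl indb.
      + assert (Hsf : site u x = false) by (subst x; apply (E_false s); auto).
        rewrite !Rmult_1_l. eapply Rle_trans. apply (PB (a+n0-x)%nat). lia.
        apply Rmult_le_compat_l; auto. apply DB_le; auto. lia.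
      + lra.
    - rewrite sumR_scal. apply Rmult_le_compat_l; auto.
      eapply Rle_trans. apply sum_mu_E; auto.
      + intros; unfold Kf; apply sumR_nonneg; intros; apply kz_nonneg; auto.
      + unfold Kf. rewrite mu_sumR. unfold DS. apply Req_le; reflexivity. }
  rewrite H1.
  assert (eps * EA <= eps * TA * D) by (rewrite Rmult_assoc; apply Rmult_le_compat_l; auto).
  rewrite Rmult_plus_distr_l. lra.
Qed.


Definition Qb q N T := forall n, (n <= N)%nat -> PIn q n T.

Lemma PIn_mono q n T T' : 0 <= q <= 1 -> PIn q n T -> T <= T' -> PIn q n T'.
Proof.
  intros Hq H HT f. eapply Rle_trans. apply H. apply Rmult_le_compat_r; auto. apply DS_nonneg; auto.
Qed.

Lemma Qb_mono q N N' T T' : 0 <= q <= 1 -> Qb q N T -> (N' <= N)%nat -> T <= T' -> Qb q N' T'.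
Proof. intros Hq H HN HT n Hn. apply PIn_mono with T; auto. apply H; lia. Qed.

Lemma PIn_0 q T : PIn q 0 T.
Proof. intros f. unfold Var, DS. rewrite !mu_0. unfold sumR; simpl. lra. Qed.

Lemma PIn_1 q : PIn q 1 1.
Proof.
  intros f. unfold Var, DS, sumR. simpl. rewrite !mu_S, !mu_0. unfold kz, vx, set_site. simpl.
  apply Req_le. ring.
Qed.

Lemma Qb_1 q : Qb q 1 1.
Proof. intros n Hn. destruct n as [|[|]]. apply PIn_0. apply PIn_1. lia. Qed.

Lemma eps_pos q d : 0 < q < 1 -> (1 <= d)%nat -> 0 < 1 - (1-q)^d <= 1.
Proof.
  intros Hq Hd. assert (0 <= 1 - q < 1) by lra. pose proof (pow_lt_1_compat (1-q) d H ltac:(lia)). lra.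
Qed.

Lemma Qb_step q a d T : 0 < q < 1 -> 0 <= T -> (1 <= d <= a)%nat -> Qb q a T ->
  Qb q (2*a - d + 1) (5 / (1 - (1-q)^d) * T).
Proof.
  intros Hq HT Hd HQ n Hn.
  pose proof (eps_pos q d Hq ltac:(lia)) as [He1 He2].
  set (eps := 1 - (1-q)^d) in *.
  assert (HT' : T <= 5 / eps * T).
  { apply Rle_trans with (5 * T); [lra|]. unfold Rdiv. rewrite Rmult_assoc.
    apply Rmult_le_compat_l; [lra|]. rewrite <- (Rmult_1_l T) at 1. apply Rmult_le_compat_r; auto.
    apply Rmult_le_reg_l with eps; auto. rewrite Rinv_r by lra. lra. }
  destruct (le_lt_dec n a) as [Hna|Hna].
  - apply PIn_mono with T; auto; try lra; apply HQ; auto.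
  - intros f. replace n with (a + (n - a))%nat by lia.
    pose proof (bisect q a (n-a) d T T f ltac:(lra) Hd ltac:(lia) HT HT (HQ a (le_n a))
                  (fun m Hm => HQ m Hm)) as HB.
    fold eps in HB. set (D := DS q (a + (n-a)) f) in *.
    assert (0 <= D) by (apply DS_nonneg; lra).
    assert (eps * T * D <= T * D).
    { rewrite !Rmult_assoc. rewrite <- (Rmult_1_l (T*D)) at 2.
      apply Rmult_le_compat_r; [apply Rmult_le_pos|]; lra. }
    assert (eps * Var q (a + (n - a)) f <= 5 * T * D) by lra.
    apply Rmult_le_reg_l with eps; auto.
    replace (eps * (5 / eps * T * D)) with (5 * T * D) by (field; lra). lra.
Qed.

Lemma Qb_3 q : 0 < q < 1 -> Qb q 3 (25 / q^2).
Proof.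
  intros Hq.
  pose proof (Qb_step q 1 1 1 Hq ltac:(lra) ltac:(lia) (Qb_1 q)) as H2. simpl in H2.
  assert (E1 : 1 - (1 - q) * 1 = q) by ring. rewrite E1 in H2.
  pose proof (Qb_step q 2 1 (5/q*1) Hq ltac:(apply Rmult_le_pos; [apply Rmult_le_pos|]; try lra; left; apply Rinv_0_lt_compat; lra)
                ltac:(lia) H2) as H4. simpl in H4. rewrite E1 in H4.
  apply Qb_mono with 4%nat (5/q*(5/q*1)); auto; try lra; try lia.
  apply Req_le. field. lra.
Qed.

Lemma gap_bound q L T g : 0 < q < 1 -> 0 < T -> PIn q L T -> is_spectral_gap q L g -> / g <= T.
Proof.
  intros Hq HT HP [Hlb Hglb].
  assert (H : / T <= g).
  { apply Hglb. intros t [f [HV Ht]]. subst t.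
    pose proof (Var_nonneg q L f ltac:(lra)).
    assert (0 < Var q L f) by lra.
    pose proof (HP f). rewrite Dir_eq.
    apply Rmult_le_reg_l with T; auto. rewrite Rinv_r by lra.
    apply Rmult_le_reg_r with (Var q L f); auto.
    replace (T * (DS q L f / Var q L f) * Var q L f) with (T * DS q L f) by (field; lra). lra. }
  assert (0 < / T) by (apply Rinv_0_lt_compat; auto).
  rewrite <- (Rinv_inv T). apply Rinv_le_contravar; lra.
Qed.


Lemma ell_S r i : (1 <= i)%nat -> ell r (S i) = (2 * ell r i - (ell r i + r - 1) / r)%nat.
Proof. intros H. destruct i as [|j]. lia. reflexivity. Qed.

Lemma div_facts a r : (1 <= a)%nat -> (1 <= r)%nat ->
  (a <= r * ((a + r - 1) / r))%nat /\ (r * ((a + r - 1) / r) <= a + r - 1)%nat /\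
  (1 <= (a + r - 1) / r <= a)%nat.
Proof.
  intros Ha Hr. pose proof (Nat.div_mod (a + r - 1) r ltac:(lia)) as H1.
  pose proof (Nat.mod_upper_bound (a + r - 1) r ltac:(lia)) as H2.
  set (x := ((a + r - 1) / r)%nat) in *. set (m := ((a + r - 1) mod r)%nat) in *.
  split; [nia|split; [nia|]]. split. nia. nia.
Qed.

Lemma ell_ge1 r i : (1 <= r)%nat -> (3 <= ell r i)%nat.
Proof.
  intros Hr. induction i as [|i IH]. simpl; lia.
  destruct i as [|j]. simpl; lia.
  rewrite ell_S by lia. pose proof (div_facts (ell r (S j)) r ltac:(lia) Hr). nia.
Qed.

Lemma ell_up r i : (1 <= r)%nat -> (1 <= i)%nat -> INR (ell r i) <= 3 * 2^(i-1).
Proof.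
  intros Hr Hi. induction i as [|i IH]. lia.
  destruct i as [|j]. simpl. lra.
  rewrite ell_S by lia. pose proof (div_facts (ell r (S j)) r ltac:(pose proof (ell_ge1 r (S j) Hr); lia) Hr).
  assert (HH : (2 * ell r (S j) - (ell r (S j) + r - 1) / r <= 2 * ell r (S j))%nat) by lia.
  apply le_INR in HH. rewrite mult_INR in HH. replace (INR 2) with 2 in HH by (simpl; lra).
  specialize (IH ltac:(lia)). replace (S (S j) - 1)%nat with (S (S j - 1)) by lia. simpl pow. replace (j - 0)%nat with (S j - 1)%nat by lia. lra.
Qed.

Lemma ell_low r i : (1 <= r)%nat -> (1 <= i)%nat ->
  INR (ell r i) - 1 >= 2 * (2 - 1 / INR r)^(i-1).
Proof.
  intros Hr Hi. assert (HR : 1 <= INR r) by (apply (le_INR 1); lia).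
  induction i as [|i IH]. lia.
  destruct i as [|j]. simpl. lra.
  specialize (IH ltac:(lia)).
  set (a := ell r (S j)) in *. pose proof (ell_ge1 r (S j) Hr). fold a in H.
  rewrite ell_S by lia. fold a.
  pose proof (div_facts a r ltac:(lia) Hr) as [H1 [H2 H3]].
  set (x := ((a + r - 1) / r)%nat) in *.
  rewrite minus_INR by lia. rewrite mult_INR. simpl (INR 2).
  apply le_INR in H2. rewrite mult_INR, minus_INR, plus_INR in H2 by lia. simpl (INR 1) in H2.
  replace (S (S j) - 1)%nat with (S (S j - 1)) by lia. simpl pow.
  assert (HX : INR x <= (INR a + INR r - 1) / INR r).
  { apply Rmult_le_reg_l with (INR r); [lra|]. field_simplify; lra. }
  assert (E : 2 * INR a - (INR a + INR r - 1) / INR r - 1 = (2 - 1 / INR r) * (INR a - 1))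
    by (field; lra).
  assert (0 <= 2 - 1 / INR r).
  { assert (1 / INR r <= 1). { apply Rmult_le_reg_l with (INR r); [lra|]. field_simplify; lra. } lra. }
  assert ((2 - 1 / INR r) * (2 * (2 - 1 / INR r) ^ (S j - 1)) <= (2 - 1 / INR r) * (INR a - 1))
    by (apply Rmult_le_compat_l; lra).
  replace (j - 0)%nat with (S j - 1)%nat by lia. lra.
Qed.


Definition beta r := (1 - 1/(2*INR r))^r.
Definition gam q dd r := 5*(1+3*dd)*INR r/(q*beta r).
Fixpoint Wf q dd r j := match j with O => 25/q^2 | S k => Wf q dd r k * gam q dd r / 2^(S k) end.

Lemma bern x n : 0 <= x <= 1 -> 1 - INR n * x <= (1-x)^n.
Proof.
  intros H. induction n. simpl; lra. rewrite S_INR. simpl pow.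
  assert (0 <= INR n) by apply pos_INR. assert (0 <= (1-x)^n) by (apply pow_le; lra). nra.
Qed.

Lemma pow_anti x m n : 0 <= x <= 1 -> (m <= n)%nat -> x^n <= x^m.
Proof.
  intros H Hmn. induction Hmn. lra. simpl. assert (0 <= x^m0) by (apply pow_le; lra). nra.
Qed.

Lemma beta_ge r : (1 <= r)%nat -> 1/2 <= beta r <= 1.
Proof.
  intros Hr. assert (HR : 1 <= INR r) by (apply (le_INR 1); lia).
  assert (Hx : 0 <= 1/(2*INR r) <= 1).
  { split. apply Rlt_le, Rdiv_lt_0_compat; lra.
    apply Rmult_le_reg_l with (2*INR r); [lra|]. field_simplify; lra. }
  unfold beta. split.
  - pose proof (bern (1/(2*INR r)) r Hx). replace (INR r * (1/(2*INR r))) with (1/2) in H by (field; lra). lra.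
  - assert (0 <= 1 - 1/(2*INR r) <= 1) by lra. pose proof (pow_anti _ 0 r H ltac:(lia)). simpl in H0. lra.
Qed.

Lemma eps_low q n : 0 <= q <= 1 -> (1-q)^n * (1 + q * INR n) <= 1.
Proof.
  intros H. induction n. simpl; lra. rewrite S_INR. simpl pow.
  assert (0 <= (1-q)^n) by (apply pow_le; lra). assert (0 <= INR n) by apply pos_INR.
  assert ((1-q)^n * (q*q*INR n + q*q) >= 0).
  { apply Rle_ge, Rmult_le_pos; auto. nra. }
  nra.
Qed.

Lemma ell_beta r i : (1 <= r)%nat -> (1 <= i <= S r)%nat -> 2^i * beta r <= INR (ell r i).
Proof.
  intros Hr Hi. pose proof (ell_low r i Hr ltac:(lia)).
  assert (HR : 1 <= INR r) by (apply (le_INR 1); lia).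
  assert (E : 2 - 1 / INR r = 2 * (1 - 1/(2*INR r))) by (field; lra).
  rewrite E, Rpow_mult_distr in H.
  assert (Hx : 0 <= 1 - 1/(2*INR r) <= 1).
  { assert (0 <= 1/(2*INR r) <= 1). { split. apply Rlt_le, Rdiv_lt_0_compat; lra.
    apply Rmult_le_reg_l with (2*INR r); [lra|]. field_simplify; lra. } lra. }
  pose proof (pow_anti _ (i-1) r Hx ltac:(lia)). fold (beta r) in H0.
  assert (0 < 2^(i-1)) by (apply pow_lt; lra).
  replace (2^i) with (2 * 2^(i-1)) by (replace i with (S (i-1)) at 2 by lia; reflexivity).
  assert (2^(i-1) * beta r <= 2^(i-1) * (1 - 1/(2*INR r))^(i-1)) by (apply Rmult_le_compat_l; lra).
  lra.
Qed.

Lemma step_num q dd r i : 0 < q < 1 -> (1 <= r)%nat -> (1 <= i <= r)%nat -> q * 2^r <= dd ->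
  5 / (1 - (1-q)^((ell r i + r - 1)/r)) <= gam q dd r / 2^i.
Proof.
  intros Hq Hr Hi Hdd.
  set (a := ell r i). pose proof (ell_ge1 r i Hr) as Ha. fold a in Ha.
  pose proof (div_facts a r ltac:(lia) Hr) as [H1 [H2 H3]].
  set (x := ((a + r - 1)/r)%nat) in *.
  set (X := INR x). set (RR := INR r).
  assert (HR : 1 <= RR) by (apply (le_INR 1); lia).
  assert (HX : 1 <= X) by (apply (le_INR 1); lia).
  assert (HaX : INR a <= RR * X) by (apply le_INR in H1; rewrite mult_INR in H1; auto).
  assert (HXa : X <= INR a) by (apply le_INR; lia).
  pose proof (ell_beta r i Hr ltac:(lia)) as Hb. fold a in Hb.
  pose proof (beta_ge r Hr) as Hbe.
  assert (Hup : INR a <= 3 * 2^r).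
  { pose proof (ell_up r i Hr ltac:(lia)). fold a in H.
    pose proof (Rle_pow 2 (i-1) r ltac:(lra) ltac:(lia)). lra. }
  assert (HqX : q * X <= 3 * dd).
  { assert (q * X <= q * (3 * 2^r)) by (apply Rmult_le_compat_l; lra). lra. }
  pose proof (eps_low q x ltac:(lra)) as He. fold X in He.
  assert (0 < q * X) by nra.
  assert (Heps : q * X / (1 + 3*dd) <= 1 - (1-q)^x).
  { assert (0 < 1 + q*X) by lra.
    assert ((1-q)^x <= 1/(1+q*X)).
    { apply Rmult_le_reg_r with (1 + q*X); auto. field_simplify; lra. }
    assert (q * X / (1 + 3*dd) <= q*X/(1+q*X)).
    { unfold Rdiv. apply Rmult_le_compat_l; [lra|]. apply Rinv_le_contravar; lra. }
    assert (q*X/(1+q*X) = 1 - 1/(1+q*X)) by (field; lra). lra. }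
  assert (Hpos : 0 < q * X / (1 + 3*dd)) by (apply Rdiv_lt_0_compat; lra).
  assert (Hpi : 0 < 2^i) by (apply pow_lt; lra).
  apply Rle_trans with (5 / (q * X / (1 + 3*dd))).
  { unfold Rdiv. apply Rmult_le_compat_l; [lra|]. apply Rinv_le_contravar; lra. }
  unfold gam. fold RR.
  replace (5 / (q * X / (1 + 3 * dd))) with (5 * (1 + 3*dd) * / (q * X)) by (field; lra).
  replace (5 * (1 + 3 * dd) * RR / (q * beta r) / 2 ^ i) with (5 * (1 + 3*dd) * / (q * beta r * 2^i / RR))
    by (field; repeat split; lra).
  apply Rmult_le_compat_l; [lra|]. apply Rinv_le_contravar.
  - apply Rdiv_lt_0_compat; [|lra]. apply Rmult_lt_0_compat; [|lra]. apply Rmult_lt_0_compat; lra.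
  - apply Rmult_le_reg_r with RR; [lra|]. field_simplify; [|lra].
    assert (beta r * 2^i <= RR * X) by lra. nra.
Qed.


Lemma gam_pos q dd r : 0 < q -> 0 <= dd -> (1 <= r)%nat -> 0 < gam q dd r.
Proof.
  intros Hq Hd Hr. unfold gam. pose proof (beta_ge r Hr).
  assert (1 <= INR r) by (apply (le_INR 1); lia).
  apply Rdiv_lt_0_compat. nra. nra.
Qed.

Lemma main_ind q dd r : 0 < q < 1/2 -> (3 <= r)%nat -> q * 2^r <= dd ->
  forall j, (S j <= r)%nat -> Qb q (ell r (S j)) (Wf q dd r j) /\ 0 < Wf q dd r j.
Proof.
  intros Hq Hr Hdd.
  assert (Hdd0 : 0 <= dd) by (assert (0 < 2^r) by (apply pow_lt; lra); nra).
  pose proof (gam_pos q dd r ltac:(lra) Hdd0 ltac:(lia)) as Hg.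
  induction j; intros Hj.
  - split. simpl. apply Qb_3. lra. simpl. apply Rdiv_lt_0_compat; [lra|]. nra.
  - destruct (IHj ltac:(lia)) as [HQ HW].
    set (a := ell r (S j)) in *. pose proof (ell_ge1 r (S j) ltac:(lia)) as Ha. fold a in Ha.
    pose proof (div_facts a r ltac:(lia) ltac:(lia)) as [H1 [H2 H3]].
    pose proof (Qb_step q a ((a + r - 1)/r) (Wf q dd r j) ltac:(lra) ltac:(lra) H3 HQ) as HS.
    pose proof (step_num q dd r (S j) ltac:(lra) ltac:(lia) ltac:(lia) Hdd) as HN. fold a in HN.
    assert (Hp : 0 < 2 ^ S j) by (apply pow_lt; lra).
    split.
    + apply Qb_mono with (2 * a - (a + r - 1) / r + 1)%nat (5 / (1 - (1 - q) ^ ((a + r - 1) / r)) * Wf q dd r j); auto.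
      * lra.
      * rewrite ell_S by lia. fold a. lia.
      * simpl Wf. replace (Wf q dd r j * gam q dd r / (2 * 2 ^ j)) with (gam q dd r / 2^(S j) * Wf q dd r j)
          by (simpl; field; apply pow_nonzero; lra).
        apply Rmult_le_compat_r; lra.
    + simpl Wf. apply Rdiv_lt_0_compat. nra. simpl in Hp. lra.
Qed.

Lemma Wf_closed q dd r j : q <> 0 ->
  Wf q dd r j = 25 / q^2 * gam q dd r ^ j / 2 ^ ((S j * j) / 2).
Proof.
  intros Hq. induction j.
  - simpl. field. auto.
  - simpl Wf. rewrite IHj.
    replace ((S (S j) * S j) / 2)%nat with ((S j * j)/2 + S j)%nat.
    + rewrite pow_add. simpl pow. field. repeat split; try assumption; apply pow_nonzero; lra.
    + replace (S (S j) * S j)%nat with (S j * j + S j * 2)%nat by lia.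
      rewrite Nat.div_add by lia. reflexivity.
Qed.

Lemma INR_le_pow2 n : INR n <= 2^n.
Proof. induction n. simpl; lra. rewrite S_INR. simpl. pose proof (pow_R1_Rle 2 n ltac:(lra)). lra. Qed.

Lemma exists_pow2 x : exists N : nat, x <= 2^N.
Proof. destruct (INR_unbounded x) as [n Hn]. exists n. pose proof (INR_le_pow2 n). lra. Qed.

Lemma exp_pow x n : exp x ^ n = exp (INR n * x).
Proof. induction n. simpl. rewrite Rmult_0_l, exp_0. reflexivity.
  rewrite S_INR. simpl pow. rewrite IHn. rewrite <- exp_plus. f_equal. ring. Qed.

Lemma pow_fact n : INR n ^ n <= 3^n * INR (fact n).
Proof.
  induction n. simpl; lra.
  destruct n as [|m].
  - simpl. lra.
  - set (k := S m) in *.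
    assert (Hk : 1 <= INR k) by (apply (le_INR 1); unfold k; lia).
    assert (Hb : (INR k + 1)^k <= 3 * INR k ^ k).
    { replace (INR k + 1) with (INR k * (1 + 1/INR k)) by (field; lra).
      rewrite Rpow_mult_distr.
      assert ((1 + 1/INR k)^k <= 3).
      { assert (1 + 1/INR k <= exp (1/INR k)).
        { destruct (Req_dec (1/INR k) 0) as [E|E]. rewrite E, exp_0; lra. left; apply exp_ineq1; auto. }
        assert (0 <= 1/INR k) by (apply Rlt_le, Rdiv_lt_0_compat; lra).
        pose proof (pow_incr (1 + 1/INR k) (exp (1/INR k)) k ltac:(lra)).
        rewrite exp_pow in H1. replace (INR k * (1/INR k)) with 1 in H1 by (field; lra).
        pose proof exp_le_3. lra. }
      assert (0 <= INR k ^ k) by (apply pow_le; lra). nra. }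
    rewrite S_INR. simpl pow. rewrite fact_simpl, mult_INR, S_INR.
    assert (0 <= INR k + 1) by lra.
    assert ((INR k + 1) * (INR k + 1)^k <= (INR k + 1) * (3 * INR k ^ k)) by (apply Rmult_le_compat_l; lra).
    assert ((INR k + 1) * INR k ^ k <= (INR k + 1) * (3 ^ k * INR (fact k))) by (apply Rmult_le_compat_l; lra).
    apply Rle_trans with ((INR k + 1) * (3 * INR k ^ k)); auto.
    replace ((INR k + 1) * (3 * INR k ^ k)) with (3 * ((INR k + 1) * INR k ^ k)) by ring.
    replace (3 * 3 ^ k * ((INR k + 1) * INR (fact k))) with (3 * ((INR k + 1) * (3 ^ k * INR (fact k)))) by ring.
    replace (3 * (3 * 3^m) * ((INR k+1)*INR(fact k))) with (3 * ((INR k + 1) * (3 ^ k * INR (fact k)))) by (unfold k; simpl; ring). lra.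
Qed.


Lemma key_num (d q : R) (r N P : nat) : 0 < d -> 0 < q < 1/2 -> (3 <= r)%nat ->
  q * 2^r <= d -> 30*(1+3*d) <= 2^N -> d^N <= 2^P ->
  25 / q^2 * gam q d r ^ (r-1) <= / q ^ (6+N+P) * INR (fact r) / q^r.
Proof.
  intros Hd Hq Hr Hdd HN HP.
  set (Q := / q).
  assert (HQ : 2 <= Q).
  { unfold Q. apply Rmult_le_reg_l with q; [lra|]. rewrite Rinv_r by lra. lra. }
  set (RR := INR r). assert (HR : 1 <= RR) by (apply (le_INR 1); lia).
  set (K0 := 1 + 3*d).
  pose proof (beta_ge r ltac:(lia)) as Hb.
  assert (Hg0 : 0 <= gam q d r) by (apply Rlt_le, gam_pos; lra || lia).
  assert (Hg : gam q d r <= 10 * K0 * RR * Q).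
  { unfold gam, Q, K0. fold RR. apply Rmult_le_reg_r with (q * beta r). nra.
    field_simplify; [|lra|split;lra]. assert (0 <= (beta r - 1/2) * (RR * (3*d+1))) by (apply Rmult_le_pos; nra). nra. }
  assert (H1 : gam q d r ^ (r-1) <= (10*K0)^r * RR^r * Q^(r-1)).
  { eapply Rle_trans. apply pow_incr. split; [exact Hg0| exact Hg].
    rewrite (Rpow_mult_distr (10*K0*RR) Q), (Rpow_mult_distr (10*K0) RR).
    assert ((10*K0)^(r-1) <= (10*K0)^r) by (apply Rle_pow; [unfold K0; lra| lia]).
    assert (RR^(r-1) <= RR^r) by (apply Rle_pow; [lra|lia]).
    assert (0 <= Q^(r-1)) by (apply pow_le; lra).
    assert (0 <= RR^(r-1)) by (apply pow_le; lra).
    assert (0 <= (10*K0)^(r-1)) by (apply pow_le; unfold K0; lra).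
    apply Rmult_le_compat_r; auto. apply Rmult_le_compat; auto. }
  pose proof (pow_fact r) as Hf. fold RR in Hf.
  assert (HK : (30*K0)^r <= Q^(N+P)).
  { eapply Rle_trans. apply pow_incr. split; [unfold K0; lra| exact HN].
    rewrite <- pow_mult, Nat.mul_comm, pow_mult.
    assert (H2r : 2^r <= d * Q) by (unfold Q; apply Rmult_le_reg_l with q; [lra|]; field_simplify; lra).
    eapply Rle_trans. apply pow_incr. split; [apply pow_le; lra| exact H2r].
    rewrite Rpow_mult_distr, pow_add, Rmult_comm.
    apply Rmult_le_compat_l. apply pow_le; lra.
    eapply Rle_trans. exact HP. apply pow_incr. lra. }
  assert (H25 : 25 <= Q^5) by (pose proof (pow_incr 2 Q 5 ltac:(lra)); simpl in *; lra).
  assert (HQp : forall n, 0 <= Q^n) by (intros; apply pow_le; lra).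
  assert (Hfa : 0 <= INR (fact r)) by apply pos_INR.
  replace (25 / q^2 * gam q d r ^ (r-1)) with (25 * Q^2 * gam q d r ^ (r-1))
    by (unfold Q; rewrite pow_inv; field; lra).
  replace (/ q ^ (6+N+P) * INR (fact r) / q^r) with (Q^(6+N+P) * INR (fact r) * Q^r)
    by (unfold Q; rewrite !pow_inv; field; repeat split; first [lra | apply pow_nonzero; lra]).
  assert (E1 : Q^2 * Q^(r-1) = Q * Q^r).
  { rewrite <- !pow_add. replace (2 + (r-1))%nat with (S r) by lia. reflexivity. }
  assert (E2 : Q^(6+N+P) = Q * (Q^5 * Q^(N+P))).
  { rewrite <- !pow_add. replace (6+N+P)%nat with (S (5 + (N+P))) by lia. reflexivity. }
  apply Rle_trans with (25 * Q^2 * ((10*K0)^r * RR^r * Q^(r-1))).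
  { apply Rmult_le_compat_l; auto. apply Rmult_le_pos; [lra|auto]. }
  assert (E3 : (30*K0)^r = (10*K0)^r * 3^r) by (rewrite <- Rpow_mult_distr; f_equal; ring).
  assert (H3 : (10*K0)^r * RR^r <= Q^(N+P) * INR (fact r)).
  { apply Rle_trans with ((10*K0)^r * (3^r * INR (fact r))).
    apply Rmult_le_compat_l; auto. apply pow_le; unfold K0; lra.
    rewrite <- Rmult_assoc, <- E3. apply Rmult_le_compat_r; auto. }
  replace (25 * Q^2 * ((10*K0)^r * RR^r * Q^(r-1))) with (Q * Q^r * (25 * ((10*K0)^r * RR^r)))
    by (rewrite <- E1; ring).
  rewrite E2.
  replace (Q * (Q ^ 5 * Q ^ (N + P)) * INR (fact r) * Q ^ r) with (Q * Q^r * (Q^5 * (Q^(N+P) * INR (fact r)))) by ring.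
  apply Rmult_le_compat_l. apply Rmult_le_pos; auto; lra.
  apply Rmult_le_compat; auto; try lra.
  apply Rmult_le_pos; apply pow_le; try lra. unfold K0; lra.
Qed.

Theorem mainTheorem12 :
  forall d : R, 0 < d ->
  exists c : R, 0 < c /\
    forall (q : R) (r : nat),
      0 < q -> q < 1 / 2 -> (2 < r)%nat ->
      2 ^ r <= d / q ->
      forall g : R, is_spectral_gap q (ell r r) g ->
        / g <= Rpower q (- c) *
               (INR (fact r) / (q ^ r * 2 ^ (r * (r - 1) / 2))).
Proof.
  intros d Hd.
  destruct (exists_pow2 (30*(1+3*d))) as [N HN].
  destruct (exists_pow2 (d^N)) as [P HP].
  exists (INR (6+N+P)). split. apply lt_0_INR; lia.
  intros q r Hq0 Hq1 Hr H2r g Hg.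
  assert (Hdd : q * 2^r <= d).
  { apply Rmult_le_reg_l with (/q). apply Rinv_0_lt_compat; lra.
    rewrite <- Rmult_assoc, Rinv_l by lra. unfold Rdiv in H2r. lra. }
  destruct (main_ind q d r ltac:(lra) ltac:(lia) Hdd (r-1)%nat ltac:(lia)) as [HQ HW].
  replace (S (r-1)) with r in HQ by lia.
  pose proof (gap_bound q (ell r r) _ g ltac:(lra) HW (HQ (ell r r) (le_n _)) Hg) as Hb.
  eapply Rle_trans; [exact Hb|].
  rewrite Wf_closed by lra. replace (S (r-1) * (r-1))%nat with (r * (r-1))%nat by lia.
  rewrite Rpower_Ropp, Rpower_pow by lra.
  pose proof (key_num d q r N P Hd ltac:(lra) ltac:(lia) Hdd HN HP) as HK.
  set (E := (r * (r-1) / 2)%nat).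
  assert (0 < 2^E) by (apply pow_lt; lra).
  replace (/ q ^ (6 + N + P) * (INR (fact r) / (q ^ r * 2 ^ E)))
    with ((/ q ^ (6+N+P) * INR (fact r) / q^r) * / 2^E)
    by (field; split; [apply pow_nonzero; lra| split; apply pow_nonzero; lra]).
  unfold Rdiv at 1. apply Rmult_le_compat_r. left; apply Rinv_0_lt_compat; auto. exact HK.
Qed.
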